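(* Let $(f_m)$ be a frame in $H=\mathcal{L}^2(I)$ with frame bounds $A,B>0$. For each $m$ let $\alpha^m=(\alpha^m_1,\dots,\alpha^m_N)\in(\mathcal{L}^\infty(I))^N$ be scale functions with $\Lambda_m:=\max\{\|\alpha^m_n\|_\infty: n=1,\dots,N\}<1$, and let $f_m*_{T_m}0$ denote the fractal convolution of $f_m$ with the null function with respect to $\alpha^m$. Suppose $$R:=\sum_m\left(\frac{\Lambda_m}{1-\Lambda_m}\right)^2\|f_m\|_2^2<A.$$ Then $(f_m*_{T_m}0)$ is a frame in $H$ with frame bounds $A\left(1-\sqrt{R/A}\right)^2$ and $B\left(1+\sqrt{R/B}\right)^2$.
   Context: Let $N\ge 2$, $I=[x_0,x_N]$, $\Delta: x_0<\dots<x_N$ a fixed partition, $L_n(x)=a_nx+b_n$ affine with $L_n(x_0)=x_{n-1}$, $L_n(x_N)=x_n$, $I_1=[x_0,x_1]$, $I_n=(x_{n-1},x_n]$ for $n\ge2$. For scale functions $\alpha=(\alpha_n)\in(\mathcal{L}^\infty(I))^N$ with $\operatorname{ess\,sup}_{n,x}|\alpha_n(x)|<1$ and $f,b\in\mathcal{L}^2(I)$, the fractal convolution $f*_Tb$ is the unique fixed point in $\mathcal{L}^2(I)$ of the contraction $Tg(x):=f(x)+\alpha_n(L_n^{-1}(x))(g-b)(L_n^{-1}(x))$, $x\in I_n$. A sequence $(g_m)$ in a separable Hilbert space $H$ is a frame with frame bounds $A,B>0$ if $A\|f\|^2\le\sum_m|\langle f,g_m\rangle|^2\le B\|f\|^2$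 for all $f\in H$. *)

(* Defs.v *)
From HB Require Import structures.
From mathcomp Require Import all_boot all_order all_algebra.
From mathcomp Require Import all_classical all_reals all_analysis.
Set Implicit Arguments. Unset Strict Implicit. Unset Printing Implicit Defensive.
Import Order.TTheory GRing.Theory Num.Theory.
Import numFieldNormedType.Exports.
Local Open Scope classical_set_scope.
Local Open Scope ring_scope.

Section FractalDefs.
Variable R : realType.
Local Notation mu := (@lebesgue_measure R).

Definition fc_Ival (x : nat -> R) (N : nat) : set R := [set` `[x 0%N, x N]].

Definition fc_partition (x : nat -> R) (N : nat) : Prop :=
  forall n, (n < N)%N -> x n < x n.+1.

Definition fc_Ipiece (x : nat -> R) (n : nat) : set R :=
  if n == 1%N then [set` `[x 0%N, x 1%N]] else [set` `]x n.-1, x n]].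

(* L_n^{-1} for the affine L_n with L_n(x_0) = x_{n-1}, L_n(x_N) = x_n. *)
Definition fc_Linv (x : nat -> R) (N n : nat) (y : R) : R :=
  x 0%N + (y - x n.-1) * (x N - x 0%N) / (x n - x n.-1).

Definition fc_L2 (D : set R) (f : R -> R) : Prop :=
  measurable_fun D f /\ (\int[mu]_(t in D) ((f t) ^+ 2)%:E < +oo)%E.

Definition fc_ip (D : set R) (f g : R -> R) : R :=
  Rintegral mu D (fun t => f t * g t).
Definition fc_norm2sq (D : set R) (f : R -> R) : R :=
  Rintegral mu D (fun t => (f t) ^+ 2).

Definition fc_linf (D : set R) (f : R -> R) : \bar R :=
  ereal_inf [set y : \bar R | {ae mu, forall t, D t -> ((`|f t|)%:E <= y)%E}].

Definition fc_Lambda (x : nat -> R) (N : nat) (alpha : nat -> R -> R) : \bar R :=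
  \big[Order.max/(-oo)%E]_(1 <= n < N.+1) fc_linf (fc_Ival x N) (alpha n).

Definition fc_is_frame (D : set R) (g : nat -> R -> R) (A B : R) : Prop :=
  0 < A /\ 0 < B /\ (forall m, fc_L2 D (g m)) /\
  forall f, fc_L2 D f ->
    ((A * fc_norm2sq D f)%:E <= \sum_(0 <= m <oo) ((fc_ip D f (g m)) ^+ 2)%:E)%E /\
    (\sum_(0 <= m <oo) ((fc_ip D f (g m)) ^+ 2)%:E <= (B * fc_norm2sq D f)%:E)%E.

(* h = f *_T b : h is the fixed point in L^2(I) of
   T g (t) = f t + alpha_n (L_n^{-1} t) (g - b)(L_n^{-1} t),  t in I_n. *)
Definition fc_is_fractal_conv (x : nat -> R) (N : nat) (alpha : nat -> R -> R)
    (f b h : R -> R) : Prop :=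
  fc_L2 (fc_Ival x N) h /\
  {ae mu, forall t, fc_Ival x N t -> forall n, (1 <= n <= N)%N -> fc_Ipiece x n t ->
     h t = f t + alpha n (fc_Linv x N n t) * (h (fc_Linv x N n t) - b (fc_Linv x N n t))}.

End FractalDefs.

(* Main.v *)
Require Import Defs.
From HB Require Import structures.
From mathcomp Require Import all_boot all_order all_algebra.
From mathcomp Require Import all_classical all_reals all_analysis.
From mathcomp Require Import measurable_realfun ring lra.
Set Implicit Arguments. Unset Strict Implicit. Unset Printing Implicit Defensive.
Import Order.TTheory GRing.Theory Num.Theory.
Import numFieldNormedType.Exports.
Local Open Scope classical_set_scope.
Local Open Scope ring_scope.

Section CV.
Variable R : realType.
Local Notation mu := (@lebesgue_measure R).
Variables (a b p q : R).
Hypotheses (ab : a < b) (pq : p < q).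
Let phi (t : R) : R := p + (t - a) * (q - p) / (b - a).
Let psi (y : R) : R := a + (y - p) * (b - a) / (q - p).

Lemma phi_le s t : (phi s <= phi t) = (s <= t).
Proof.
rewrite /phi lerD2l -!mulrA ler_pM2r ?lerD2r //.
by rewrite mulr_gt0 // ?invr_gt0 subr_gt0.
Qed.

Lemma phi_lt s t : (phi s < phi t) = (s < t).
Proof. by rewrite !ltNge phi_le. Qed.

Lemma phi_psi y : phi (psi y) = y.
Proof.
rewrite /phi /psi; have ? : b - a != 0 by rewrite subr_eq0 gt_eqF.
have ? : q - p != 0 by rewrite subr_eq0 gt_eqF.
field; by apply/andP.
Qed.

Lemma mphi : measurable_fun setT phi.
Proof.
rewrite /phi; apply: measurable_funD; first exact: measurable_cst.
apply: measurable_funM; last exact: measurable_cst.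
apply: measurable_funM; last exact: measurable_cst.
apply: measurable_funB; [exact: measurable_id | exact: measurable_cst].
Qed.

Let k := (q - p) / (b - a).
Let c := (b - a) / (q - p).
Lemma k_ge0 : 0 <= k.
Proof. by rewrite /k divr_ge0 // subr_ge0 ltW. Qed.
Lemma ck1 : c * k = 1.
Proof.
rewrite /c /k; have ? : b - a != 0 by rewrite subr_eq0 gt_eqF.
have ? : q - p != 0 by rewrite subr_eq0 gt_eqF.
field; by apply/andP.
Qed.
Lemma c_gt0 : 0 < c.
Proof. by rewrite /c divr_gt0 // subr_gt0. Qed.

Definition pfm : {measure set (measurableTypeR R) -> \bar R}.
refine (pushforward mu (phi : R -> measurableTypeR R) : {measure set (measurableTypeR R) -> \bar R}).
exact: mphi.
Defined.

Lemma pfmE A : pfm A = mu (phi @^-1` A).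
Proof. by []. Qed.

Lemma phi_pre_oc u v : phi @^-1` `]u, v] = `]psi u, psi v]%classic.
Proof.
apply/seteqP; split => t /=; rewrite !in_itv /=.
  move=> /andP[h1 h2]; apply/andP; split.
    by rewrite -phi_lt phi_psi.
  by rewrite -phi_le phi_psi.
move=> /andP[h1 h2]; apply/andP; split.
  by rewrite -(phi_psi u) phi_lt.
by rewrite -(phi_psi v) phi_le.
Qed.

Lemma phi_pre_cc : phi @^-1` `[p, q]%classic = `[a, b]%classic.
Proof.
have pa : phi a = p by rewrite /phi subrr !mul0r addr0.
have qb : phi b = q.
  rewrite /phi; have ? : b - a != 0 by rewrite subr_eq0 gt_eqF.
  by field.
apply/seteqP; split => t /=; rewrite !in_itv /=.
  by rewrite -{1}pa -{1}qb !phi_le.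
by rewrite -{1}pa -{1}qb !phi_le.
Qed.

Lemma pf_eq A : measurable A -> mu (phi @^-1` A) = (c%:E * mu A)%E.
Proof.
have U := @lebesgue_measure_unique R (mscale (NngNum k_ge0) pfm).
suff H : forall X, ocitv X -> mu X = mscale (NngNum k_ge0) pfm X.
  move=> mA; rewrite (U H A mA) /mscale /= /pushforward /= muleA -EFinM ck1 mul1e //.
move=> _ [[u v] _ <-] /=.
rewrite /mscale /= pfmE phi_pre_oc !lebesgue_measure_itv /=.
rewrite !lte_fin.
have psi_lt : (psi u < psi v) = (u < v).
  rewrite /psi ltrD2l -!mulrA ltr_pM2r ?ltrD2r //.
  by rewrite mulr_gt0 // ?invr_gt0 subr_gt0.
rewrite psi_lt; case: ifP => uv; last by rewrite mule0.
rewrite -!EFinD -EFinM; congr EFin.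
rewrite /k /psi; have ? : b - a != 0 by rewrite subr_eq0 gt_eqF.
have ? : q - p != 0 by rewrite subr_eq0 gt_eqF.
field; by apply/andP.
Qed.

Lemma c_ge0 : 0 <= c. Proof. exact: ltW c_gt0. Qed.

Lemma cv_integral (F : R -> \bar R) :
  measurable_fun `[p, q]%classic F -> (forall y, `[p, q]%classic y -> (0 <= F y)%E) ->
  (\int[mu]_(t in `[a, b]%classic) F (phi t) = c%:E * \int[mu]_(y in `[p, q]%classic) F y)%E.
Proof.
move=> mF F0.
rewrite -phi_pre_cc.
have mD : measurable (`[p, q]%classic : set R) by [].
have F0' : {in `[p, q]%classic, forall y, (0 <= F y)%E}.
  by move=> y; rewrite inE; exact: F0.
rewrite -(@ge0_integral_pushforward _ _ (measurableTypeR R) (measurableTypeR R) R phi mphi mu `[p, q]%classic F mD mF F0').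
transitivity (\int[mscale (NngNum c_ge0) mu]_(y in `[p, q]) F y)%E.
  apply: eq_measure_integral => /=; first exact: mphi.
  by move=> _ A mA _; rewrite /pushforward pf_eq.
exact: (@ge0_integral_mscale _ (measurableTypeR R) R mu _ mD (NngNum c_ge0) F mF F0).
Qed.

End CV.


Section P3.
Variable R : realType.

Lemma sq_ineq (a b t : R) : 0 < t ->
  (a + b) ^+ 2 <= (1 + t) * a ^+ 2 + (1 + t^-1) * b ^+ 2.
Proof.
move=> t0.
have ti : t * t^-1 = 1 by rewrite mulfV // gt_eqF.
have h : 0 <= t^-1 * (t * a - b) ^+ 2 by rewrite mulr_ge0 ?sqr_ge0 // invr_ge0 ltW.
suff -> : (1 + t) * a ^+ 2 + (1 + t^-1) * b ^+ 2 = (a + b) ^+ 2 + t^-1 * (t * a - b) ^+ 2.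
  by rewrite lerDl.
rewrite !expr2; have ? : t != 0 by rewrite gt_eqF.
by field.
Qed.

Local Open Scope ereal_scope.

Lemma frame_perturb (u v w : nat -> R) (A B G Rv : R) :
  (0 < A)%R -> (0 < B)%R -> (0 <= G)%R -> (0 <= Rv)%R -> (Rv < A)%R ->
  (forall m, 0 <= w m)%R ->
  \sum_(0 <= m <oo) (w m)%:E = Rv%:E ->
  (forall m, v m ^+ 2 <= G * w m)%R ->
  (A * G)%:E <= \sum_(0 <= m <oo) (u m ^+ 2)%:E ->
  \sum_(0 <= m <oo) (u m ^+ 2)%:E <= (B * G)%:E ->
  ((A * (1 - Num.sqrt (Rv / A)) ^+ 2) * G)%:E <= \sum_(0 <= m <oo) ((u m + v m) ^+ 2)%:E /\
  \sum_(0 <= m <oo) ((u m + v m) ^+ 2)%:E <= ((B * (1 + Num.sqrt (Rv / B)) ^+ 2) * G)%:E.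
Proof.
move=> A0 B0 G0 Rv0 RvA w0 sw vw UA UB.
have hV : \sum_(0 <= m <oo) (v m ^+ 2)%:E <= (G * Rv)%:E.
  apply: (@le_trans _ _ (\sum_(0 <= m <oo) (G%:E * (w m)%:E))).
    by apply: lee_nneseries => [i _ _|n _]; rewrite ?lee_fin ?sqr_ge0 -?EFinM ?lee_fin.
  by rewrite nneseriesZl ?sw -?EFinM // => i _; rewrite lee_fin.
have [Rv_eq0|Rv_gt0] := eqVneq Rv 0%R.
  have v0 m : v m = 0%R.
    have wm : (w m <= 0)%R.
      rewrite -lee_fin -Rv_eq0 -sw (nneseriesD1 (n := m)) //.
        by rewrite leeDl // nneseries_ge0 // => i _ _; rewrite lee_fin.
      by move=> i _; rewrite lee_fin.
    have : (v m ^+ 2 <= 0)%R.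
      by apply: (le_trans (vw m)); rewrite mulr_ge0_le0.
    move=> h; have : (v m ^+ 2 == 0)%R by rewrite eq_le h sqr_ge0.
    by rewrite sqrf_eq0 => /eqP.
  rewrite Rv_eq0 !mul0r sqrtr0 subr0 addr0 !expr1n !mulr1.
  by split; under eq_eseriesr do rewrite v0 addr0.
have Rvp : (0 < Rv)%R by rewrite lt_def Rv_gt0 Rv0.
set s := Num.sqrt Rv; set al := Num.sqrt A; set be := Num.sqrt B.
have s0 : (0 < s)%R by rewrite sqrtr_gt0.
have al0 : (0 < al)%R by rewrite sqrtr_gt0.
have be0 : (0 < be)%R by rewrite sqrtr_gt0.
have ss : (s ^+ 2 = Rv)%R by rewrite sqr_sqrtr // ltW.
have alal : (al ^+ 2 = A)%R by rewrite sqr_sqrtr // ltW.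
have bebe : (be ^+ 2 = B)%R by rewrite sqr_sqrtr // ltW.
have sal : (s < al)%R by rewrite ltr_sqrt.
have eA : Num.sqrt (Rv / A) = (s / al)%R by rewrite sqrtrM ?sqrtrV // ltW.
have eB : Num.sqrt (Rv / B) = (s / be)%R by rewrite sqrtrM ?sqrtrV // ltW.
rewrite eA eB.
set S := \sum_(0 <= m <oo) ((u m + v m) ^+ 2)%:E.
have S0 : 0 <= S by apply: nneseries_ge0 => i _ _; rewrite lee_fin sqr_ge0.
have gen (a b : nat -> R) (t : R) : (0 < t)%R ->
    \sum_(0 <= m <oo) ((a m + b m) ^+ 2)%:E <=
    (1 + t)%:E * \sum_(0 <= m <oo) (a m ^+ 2)%:E +
    (1 + t^-1)%:E * \sum_(0 <= m <oo) (b m ^+ 2)%:E.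
  move=> t0.
  apply: (@le_trans _ _ (\sum_(0 <= m <oo)
     ((1 + t)%:E * (a m ^+ 2)%:E + (1 + t^-1)%:E * (b m ^+ 2)%:E))).
    apply: lee_nneseries => [i _ _|n _]; first by rewrite lee_fin sqr_ge0.
    by rewrite -!EFinM -EFinD lee_fin sq_ineq.
  have t1 : (0 <= 1 + t)%R by rewrite addr_ge0 // ltW.
  have t2 : (0 <= 1 + t^-1)%R by rewrite addr_ge0 // invr_ge0 ltW.
  rewrite nneseriesD; last 2 first.
  - by move=> i _ _; rewrite -EFinM lee_fin mulr_ge0 // sqr_ge0.
  - by move=> i _ _; rewrite -EFinM lee_fin mulr_ge0 // sqr_ge0.
  by rewrite !nneseriesZl // => i _; rewrite lee_fin sqr_ge0.
have hup : S <= ((B * (1 + s / be) ^+ 2) * G)%:E.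
  set t := (s / be)%R.
  have t0 : (0 < t)%R by rewrite divr_gt0.
  apply: (le_trans (gen u v t t0)).
  apply: (@le_trans _ _ ((1 + t)%:E * (B * G)%:E + (1 + t^-1)%:E * (G * Rv)%:E)).
    apply: leeD; apply: lee_wpmul2l => //; rewrite lee_fin addr_ge0 // ?invr_ge0 ltW //.
  rewrite -!EFinM -EFinD lee_fin le_eqVlt; apply/orP; left; apply/eqP.
  rewrite /t -bebe -ss; have ? : be != 0%R by rewrite gt_eqF.
  have ? : s != 0%R by rewrite gt_eqF.
  field; by apply/andP.
have Sfin : S \is a fin_num.
  by rewrite ge0_fin_numE // (le_lt_trans hup) // ltry.
split => //.
set t := (s / (al - s))%R.
have as0 : (0 < al - s)%R by rewrite subr_gt0.
have t0 : (0 < t)%R by rewrite divr_gt0.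
have L := gen (fun m => u m + v m)%R (fun m => - v m)%R t t0.
have E1 : \sum_(0 <= m <oo) ((u m + v m + - v m) ^+ 2)%:E = \sum_(0 <= m <oo) (u m ^+ 2)%:E.
  by apply: eq_eseriesr => m _; rewrite addrK.
have E2 : \sum_(0 <= m <oo) ((- v m) ^+ 2)%:E = \sum_(0 <= m <oo) (v m ^+ 2)%:E.
  by apply: eq_eseriesr => m _; rewrite sqrrN.
rewrite E1 E2 -/S in L.
have L2 := le_trans UA L.
have L3 : (A * G)%:E <= (1 + t)%:E * S + (1 + t^-1)%:E * (G * Rv)%:E.
  apply: (le_trans L2); apply: leeD => //; apply: lee_wpmul2l => //.
  by rewrite lee_fin addr_ge0 // invr_ge0 ltW.
rewrite -(fineK Sfin) in L3 *.
rewrite -!EFinM -EFinD lee_fin in L3; rewrite lee_fin.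
have key : ((1 + t) * (A * (1 - s / al) ^+ 2 * G) = A * G - (1 + t^-1) * (G * Rv))%R.
  rewrite /t -alal -ss; have ? : al != 0%R by rewrite gt_eqF.
  have ? : s != 0%R by rewrite gt_eqF.
  have ? : (al - s != 0)%R by rewrite gt_eqF.
  field; by apply/and3P; split.
have t1 : (0 < 1 + t)%R by rewrite addr_gt0.
rewrite -(ler_pM2l t1) key lerBlDr.
exact: L3.
Qed.
End P3.


Section P2.
Variable R : realType.
Local Notation mu := (@lebesgue_measure R).
Variable D : set R.
Hypothesis mD : @measurable _ (measurableTypeR R) D.
Local Notation integ h := (mu.-integrable D (EFin \o h)).

Lemma intR_Z (r : R) (a : R -> R) : integ a -> integ (fun x => r * a x).
Proof.
move=> ia; refine (eq_integrable mD _ _ _ (integrableZl mD r ia)) => x _ /=.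
by rewrite EFinM.
Qed.

Lemma intR_D (a b : R -> R) : integ a -> integ b -> integ (fun x => a x + b x).
Proof.
move=> ia ib; refine (eq_integrable mD _ _ _ (integrableD mD ia ib)) => x _ /=.
by rewrite EFinD.
Qed.

Lemma intR_lt (a : R -> R) : integ a -> (forall x, 0 <= a x) ->
  (\int[mu]_(x in D) (a x)%:E < +oo)%E.
Proof.
move=> /integrableP[_ h] a0; apply: le_lt_trans h.
by rewrite le_eqVlt; apply/orP; left; apply/eqP; apply: eq_integral => x _ /=; rewrite ger0_norm.
Qed.


Lemma L2_int_sq f : fc_L2 D f -> integ (fun t => f t ^+ 2).
Proof.
move=> [mf hf]; apply/integrableP; split.
  by apply/measurable_EFinP; exact: measurable_funX.
apply: le_lt_trans hf; rewrite le_eqVlt; apply/orP; left; apply/eqP.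
by apply: eq_integral => x _ /=; rewrite ger0_norm // sqr_ge0.
Qed.

Lemma L2_sqE f : fc_L2 D f ->
  (\int[mu]_(t in D) ((f t) ^+ 2)%:E)%E = (fc_norm2sq D f)%:E.
Proof.
move=> [_ hf]; rewrite /fc_norm2sq /Rintegral fineK // ge0_fin_numE //.
by apply: integral_ge0 => x _; rewrite lee_fin sqr_ge0.
Qed.

Lemma norm2sq_ge0 f : 0 <= fc_norm2sq D f.
Proof. by apply: Rintegral_ge0 => x _; exact: sqr_ge0. Qed.

Lemma abs_mul_le (a b : R) : `|a * b| <= a ^+ 2 + b ^+ 2.
Proof.
rewrite normrM; have := sqr_ge0 (`|a| - `|b|).
rewrite -(real_normK (num_real a)) -(real_normK (num_real b)).
have := normr_ge0 a; have := normr_ge0 b.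
set p := `|a|; set q := `|b|; move=> *; nra.
Qed.

Lemma L2_mul f g : fc_L2 D f -> fc_L2 D g -> integ (fun t => f t * g t).
Proof.
move=> hf hg.
apply: (le_integrable mD _ _ (intR_D (L2_int_sq hf) (L2_int_sq hg))).
  by apply/measurable_EFinP; apply: measurable_funM; [case: hf|case: hg].
move=> x _ /=; rewrite lee_fin [X in _ <= X]ger0_norm ?addr_ge0 ?sqr_ge0 //.
exact: abs_mul_le.
Qed.

Lemma L2_B f g : fc_L2 D f -> fc_L2 D g -> fc_L2 D (fun t => f t - g t).
Proof.
move=> hf hg; have mfg : measurable_fun D (fun t => f t - g t).
  by apply: measurable_funB; [case: hf|case: hg].
split => //; apply: intR_lt; last by move=> x; exact: sqr_ge0.
apply: (le_integrable mD _ _ (intR_D (intR_Z 2 (L2_int_sq hf)) (intR_Z 2 (L2_int_sq hg)))).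
  by apply/measurable_EFinP; exact: measurable_funX.
move=> x _ /=; rewrite lee_fin (ger0_norm (sqr_ge0 _)) ger0_norm; last first.
  by rewrite addr_ge0 // mulr_ge0 // sqr_ge0.
have := sqr_ge0 (f x + g x); move=> h; nra.
Qed.

Lemma ip_add g f1 f2 : fc_L2 D g -> fc_L2 D f1 -> fc_L2 D f2 ->
  fc_ip D g (fun t => f1 t + f2 t) = fc_ip D g f1 + fc_ip D g f2.
Proof.
move=> hg h1 h2; rewrite /fc_ip -RintegralD //; try exact: L2_mul.
by apply: eq_Rintegral => x _; rewrite mulrDr.
Qed.

Lemma quad_disc (F P G : R) : 0 <= G ->
  (forall t, 0 <= F - 2 * t * P + t ^+ 2 * G) -> P ^+ 2 <= F * G.
Proof.
move=> G0 H; have [G_eq0|G_gt0] := eqVneq G 0.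
  have [P_eq0|P_neq0] := eqVneq P 0.
    by rewrite P_eq0 G_eq0 expr0n mulr0.
  have := H ((F + 1) / (2 * P)).
  have -> : F - 2 * ((F + 1) / (2 * P)) * P + ((F + 1) / (2 * P)) ^+ 2 * G = -1.
    by rewrite G_eq0; field; rewrite P_neq0.
  by rewrite oppr_ge0 ler10.
have Gp : 0 < G by rewrite lt_def G_gt0 G0.
have := H (P / G).
have -> : F - 2 * (P / G) * P + (P / G) ^+ 2 * G = (F * G - P ^+ 2) / G.
  by field.
by rewrite pmulr_lge0 ?invr_gt0 // subr_ge0.
Qed.

Lemma CS f g : fc_L2 D f -> fc_L2 D g ->
  (fc_ip D f g) ^+ 2 <= fc_norm2sq D f * fc_norm2sq D g.
Proof.
move=> hf hg; apply: quad_disc; first exact: norm2sq_ge0.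
move=> t; have := norm2sq_ge0 (fun x => f x - t * g x).
suff -> : fc_norm2sq D (fun x => f x - t * g x) =
  fc_norm2sq D f - 2 * t * fc_ip D f g + t ^+ 2 * fc_norm2sq D g by [].
rewrite /fc_norm2sq /fc_ip.
rewrite (@eq_Rintegral _ _ _ mu D (fun x => f x ^+ 2 + ((- (2 * t)) * (f x * g x) + t ^+ 2 * (g x ^+ 2)))); last first.
  by move=> x _; rewrite !expr2; ring.
rewrite RintegralD //; last first.
- by apply: intR_D; apply: intR_Z; [exact: L2_mul | exact: L2_int_sq].
- exact: L2_int_sq.
rewrite RintegralD //; last first.
- by apply: intR_Z; exact: L2_int_sq.
- by apply: intR_Z; exact: L2_mul.
rewrite !RintegralZl //; last first.
- exact: L2_int_sq.
- exact: L2_mul.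
ring.
Qed.

End P2.


Section P4.
Variable R : realType.
Local Notation mu := (@lebesgue_measure R).
Variables (N : nat) (x : nat -> R) (al : nat -> R -> R) (f h : R -> R) (lam : R).
Hypothesis N1 : (1 <= N)%N.
Hypothesis part : fc_partition x N.
Hypothesis mal : forall n, (1 <= n <= N)%N -> measurable_fun (fc_Ival x N) (al n).
Hypothesis hae : forall n, (1 <= n <= N)%N ->
  {ae mu, forall t, fc_Ival x N t -> `|al n t| <= lam}.
Hypothesis lam0 : 0 <= lam.
Hypothesis conv : fc_is_fractal_conv x N al f (fun=> 0) h.
Hypothesis hf : fc_L2 (fc_Ival x N) f.

Local Notation I := (fc_Ival x N).

Lemma xle i j : (i <= j <= N)%N -> x i <= x j.
Proof.
move=> /andP[ij jN]; elim: j ij jN => [|j IH]; first by rewrite leqn0 => /eqP ->.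
rewrite leq_eqVlt => /orP[/eqP -> //|]; rewrite ltnS => ij jN.
apply: (le_trans (IH ij (ltnW jN))); exact: ltW (part jN).
Qed.

Lemma x0N : x 0 < x N.
Proof. by apply: (lt_le_trans (part N1)); apply: xle; rewrite N1 /=. Qed.

Lemma mI : @measurable _ (measurableTypeR R) I.
Proof. exact: measurable_itv. Qed.

Lemma hh : fc_L2 I h.
Proof. by case: conv. Qed.

Lemma hd : fc_L2 I (fun t => h t - f t).
Proof. exact: (@L2_B R I mI h f hh hf). Qed.


Lemma piece n : (1 <= n <= N)%N ->
  (\int[mu]_(t in `]x n.-1, x n]) ((h t - f t) ^+ 2)%:E <=
   (((x n - x n.-1) / (x N - x 0)) * lam ^+ 2)%:E *
     \int[mu]_(t in I) (h t ^+ 2)%:E)%E.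
Proof.
move=> nN; have /andP[n1 nN'] := nN.
have ab : x n.-1 < x n.
  have h1 : (n.-1 < N)%N by rewrite prednK.
  by have := part h1; rewrite prednK.
have pq := x0N.
have x0a : x 0 <= x n.-1 by apply: xle; rewrite leq0n /= (leq_trans (leq_pred n)).
have bN : x n <= x N by apply: xle; rewrite nN' leqnn.
set a := x n.-1; set b := x n; set p := x 0; set q := x N.
set phi := fun t => p + (t - a) * (q - p) / (b - a).
set G := fun y => ((al n y * h y) ^+ 2)%:E.
have mphi' : measurable_fun setT phi := mphi a b p q.
have mab : measurable_fun `[a, b] phi.
  exact: (measurable_funS measurableT (subsetT _) mphi').
have sub_oc : `]a, b] `<=` I.
  move=> t /=; rewrite !in_itv /= => /andP[ta tb]; apply/andP; split.
    exact: (le_trans x0a (ltW ta)).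
  exact: (le_trans tb bN).
have phiI : phi @` `[a, b] `<=` I.
  move=> _ [t tab <-]; rewrite -(phi_pre_cc ab pq) in tab; exact: tab.
have mG : measurable_fun I G.
  apply/measurable_EFinP; apply: measurable_funX; apply: measurable_funM.
    exact: mal.
  by case: hh.
have G0 : forall y, I y -> (0 <= G y)%E by move=> y _; rewrite lee_fin sqr_ge0.
have mGphi : measurable_fun `[a, b] (G \o phi).
  exact: (measurable_comp mI phiI mG mab).
have mGphi_oc : measurable_fun `]a, b] (G \o phi).
  apply: (measurable_funS _ _ mGphi) => //.
  by move=> t /=; rewrite !in_itv /= => /andP[/ltW -> ->].
have md2 : measurable_fun I (fun t => ((h t - f t) ^+ 2)%:E).
  by apply/measurable_EFinP; apply: measurable_funX; case: hd.
have E1 : (\int[mu]_(t in `]a, b]) ((h t - f t) ^+ 2)%:E =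
           \int[mu]_(t in `]a, b]) (G \o phi) t)%E.
  apply: ae_eq_integral => //.
  - exact: (measurable_funS mI sub_oc md2).
  case: conv => _; apply: (filterS (Filter := ae_filter_ringOfSetsType mu)) => t H tab.
  have It := sub_oc t tab.
  have Pn : fc_Ipiece x n t.
    rewrite /fc_Ipiece; case: eqP => [n1'|_] //.
    move: tab; rewrite /a /b n1' /= !in_itv /= => /andP[/ltW -> ->] //.
  rewrite (H It n nN Pn) subr0 [f t + _]addrC addrK.
  by rewrite /G /phi /fc_Linv /= exprMn.
have E2 : (\int[mu]_(t in `]a, b]) (G \o phi) t =
           \int[mu]_(t in `[a, b]) (G \o phi) t)%E.
  by rewrite integral_itv_obnd_cbnd.
have E3 : (\int[mu]_(t in `[a, b]) (G \o phi) t =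
           ((b - a) / (q - p))%:E * \int[mu]_(y in I) G y)%E :=
  cv_integral ab pq mG G0.
have E4 : (\int[mu]_(y in I) G y <= \int[mu]_(y in I) ((lam ^+ 2) * h y ^+ 2)%:E)%E.
  apply: ae_ge0_le_integral => //.
  - exact: mI.
  - by move=> t _; rewrite lee_fin mulr_ge0 // sqr_ge0.
  - apply/measurable_EFinP; apply: measurable_funM; first exact: measurable_cst.
    by apply: measurable_funX; case: hh.
  move: (hae nN); apply: (filterS (Filter := ae_filter_ringOfSetsType mu)) => t H It.
  rewrite /G lee_fin exprMn; apply: ler_wpM2r; first exact: sqr_ge0.
  have h1 := H It; have h2 := normr_ge0 (al n t).
  have h3 : al n t ^+ 2 = `|al n t| ^+ 2 by rewrite real_normK ?num_real.
  rewrite h3; nra.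
have E5 : (\int[mu]_(y in I) ((lam ^+ 2) * h y ^+ 2)%:E =
           (lam ^+ 2)%:E * \int[mu]_(y in I) (h y ^+ 2)%:E)%E.
  under eq_integral do rewrite EFinM.
  rewrite ge0_integralZl_EFin //; first exact: mI.
  - by move=> y _; rewrite lee_fin sqr_ge0.
  - by apply/measurable_EFinP; apply: measurable_funX; case: hh.
  - exact: sqr_ge0.
rewrite E1 E2 E3 [X in (_ <= X * _)%E]EFinM -muleA; apply: lee_wpmul2l.
  by rewrite lee_fin divr_ge0 // subr_ge0 ltW.
by rewrite -E5.
Qed.


Lemma partial k : (k <= N)%N ->
  (\int[mu]_(t in `[x 0, x k]) ((h t - f t) ^+ 2)%:E <=
   (((x k - x 0) / (x N - x 0)) * lam ^+ 2 * fc_norm2sq I h)%:E)%E.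
Proof.
have md2 : measurable_fun I (fun t => ((h t - f t) ^+ 2)%:E).
  by apply/measurable_EFinP; apply: measurable_funX; case: hd.
elim: k => [_|k IH kN].
  by rewrite set_itv1 integral_set1 subrr !mul0r.
have kN' : (k <= N)%N := ltnW kN.
have xk : x 0 <= x k by apply: xle; rewrite kN'.
have xkk : x k < x k.+1 := part kN.
have xk1N : x k.+1 <= x N by apply: xle; rewrite kN leqnn.
rewrite (@itv_bndbnd_setU _ _ (BLeft (x 0)) (BRight (x k)) (BRight (x k.+1))); last 2 first.
- by rewrite bnd_simp.
- by rewrite bnd_simp ltW.
rewrite ge0_integral_setU //; last 3 first.
- rewrite -itv_bndbnd_setU; last 2 first.
  + by rewrite bnd_simp.
  + by rewrite bnd_simp ltW.
  apply: (measurable_funS mI _ md2) => t /=; rewrite !in_itv /= => /andP[t0 tk].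
  by rewrite /fc_Ival /= in_itv /= t0 (le_trans tk xk1N).
- by move=> t _; rewrite lee_fin sqr_ge0.
- apply/disj_setPLR => t /=; rewrite !in_itv /= => /andP[_ tk]; apply/negP.
  by rewrite negb_and -leNgt tk.
have hp := piece (n := k.+1) (ltac:(by rewrite kN)).
rewrite (L2_sqE hh) /= in hp.
apply: (le_trans (leeD (IH kN') hp)).
rewrite -EFinM -EFinD lee_fin le_eqVlt; apply/orP; left; apply/eqP.
have ? : x N - x 0 != 0 by rewrite subr_eq0 gt_eqF // x0N.
by field.
Qed.

Lemma main_est : fc_norm2sq I (fun t => h t - f t) <= lam ^+ 2 * fc_norm2sq I h.
Proof.
have := partial (leqnn N).
rewrite divff ?mul1r; last by rewrite subr_eq0 gt_eqF // x0N.
by rewrite (L2_sqE hd) lee_fin.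
Qed.


Lemma d_bound : lam < 1 ->
  fc_norm2sq I (fun t => h t - f t) <= (lam / (1 - lam)) ^+ 2 * fc_norm2sq I f.
Proof.
move=> lam1.
have Dle := main_est.
set Dn := fc_norm2sq I (fun t => h t - f t) in Dle *.
set Fn := fc_norm2sq I f; set Hn := fc_norm2sq I h in Dle.
have [lam_eq0|lam_neq0] := eqVneq lam 0.
  rewrite lam_eq0 expr0n mul0r in Dle.
  by rewrite lam_eq0 mul0r expr0n mul0r.
have lamp : 0 < lam by rewrite lt_def lam_neq0 lam0.
have l1 : 0 < 1 - lam by rewrite subr_gt0.
set t := lam / (1 - lam).
have t0 : 0 < t by rewrite divr_gt0.
have iF := L2_int_sq hf; have iD := L2_int_sq hd; have iH := L2_int_sq hh.
have Hle : Hn <= (1 + t) * Fn + (1 + t^-1) * Dn.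
  have E : Rintegral mu I (fun y => (1 + t) * f y ^+ 2 + (1 + t^-1) * (h y - f y) ^+ 2)
           = (1 + t) * Fn + (1 + t^-1) * Dn.
    rewrite (RintegralD mI (intR_Z mI _ iF) (intR_Z mI _ iD)).
    by rewrite !RintegralZl //; exact: mI.
  rewrite -E /Hn /fc_norm2sq; apply: le_Rintegral.
  - exact: mI.
  - exact: iH.
  - exact: (intR_D mI (intR_Z mI _ iF) (intR_Z mI _ iD)).
  move=> y _; rewrite {1}(_ : h y = f y + (h y - f y)); last by ring.
  exact: sq_ineq.
have key : Dn <= lam ^+ 2 / (1 - lam) * Fn + lam * Dn.
  apply: (le_trans Dle); apply: (le_trans (ler_wpM2l (sqr_ge0 lam) Hle)).
  rewrite le_eqVlt; apply/orP; left; apply/eqP.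
  rewrite /t; have ? : 1 - lam != 0 by rewrite gt_eqF.
  field; by apply/andP.
rewrite -(ler_pM2l l1).
have -> : (1 - lam) * (t ^+ 2 * Fn) = lam ^+ 2 / (1 - lam) * Fn.
  have ? : 1 - lam != 0 by rewrite gt_eqF.
  by rewrite /t; field.
by rewrite mulrBl mul1r lerBlDr.
Qed.

End P4.


Section P5.
Variable R : realType.
Local Notation mu := (@lebesgue_measure R).

Lemma linf_lt_ae (D : set R) (g : R -> R) (z : R) :
  (fc_linf D g < z%:E)%E -> {ae mu, forall t, D t -> `|g t| <= z}.
Proof.
move=> /ereal_inf_lt [y Sy yz]; move: Sy.
apply: (filterS (Filter := ae_filter_ringOfSetsType mu)) => t H Dt.
have := le_lt_trans (H Dt) yz; rewrite lte_fin; exact: ltW.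
Qed.

Lemma ae_le_lim (D : set R) (g : R -> R) (l : R) :
  (forall k : nat, {ae mu, forall t, D t -> `|g t| <= l + k.+1%:R^-1}) ->
  {ae mu, forall t, D t -> `|g t| <= l}.
Proof.
move=> H; have := ae_foralln H.
apply: (filterS (Filter := ae_filter_ringOfSetsType mu)) => t Ht Dt.
apply/ler_addgt0Pr => e e0.
have [k _ /(_ k)/(_ (leqnn _)) ke] := near_infty_natSinv_lt (PosNum e0).
apply: (le_trans (Ht k Dt)); rewrite lerD2l; exact: ltW.
Qed.

Lemma Lambda_ae (N : nat) (x : nat -> R) (al : nat -> R -> R) n :
  (1 <= n <= N)%N -> (fc_Lambda x N al < 1)%E ->
  {ae mu, forall t, fc_Ival x N t -> `|al n t| <= Num.max (fine (fc_Lambda x N al)) 0}.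
Proof.
move=> /andP[n1 nN] L1.
apply: ae_le_lim => k; apply: linf_lt_ae.
have le1 : (fc_linf (fc_Ival x N) (al n) <= fc_Lambda x N al)%E.
  rewrite /fc_Lambda.
  apply: (le_trans _ (le_bigmax_nat (fun=> true) (fun i => fc_linf (fc_Ival x N) (al i)) n1 (leqnn N.+1))).
  rewrite big_ltn ?ltnS //.
  by rewrite le_max lexx.
apply: (le_lt_trans le1).
have kp : 0 < k.+1%:R^-1 :> R by rewrite invr_gt0.
move: L1; case: (fc_Lambda x N al) => [r| |] //= _.
  rewrite lte_fin; have hr : r <= Num.max r 0 by rewrite le_max lexx.
  move: hr kp; set m := Num.max r 0; set e := _^-1; move=> *; lra.
exact: ltNyr.
Qed.

End P5.


Unset Implicit Arguments.

Theorem theorem7p2 (R : realType) (N : nat) (x : nat -> R)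
  (f : nat -> R -> R) (alpha : nat -> nat -> R -> R) (h : nat -> R -> R)
  (A B Rv : R) :
  (2 <= N)%N ->
  fc_partition x N ->
  fc_is_frame (fc_Ival x N) f A B ->
  (forall m n, (1 <= n <= N)%N -> measurable_fun (fc_Ival x N) (alpha m n)) ->
  (forall m, (fc_Lambda x N (alpha m) < 1)%E) ->
  (forall m, fc_is_fractal_conv x N (alpha m) (f m) (fun=> 0) (h m)) ->
  ((\sum_(0 <= m <oo)
      ((fine (fc_Lambda x N (alpha m)) / (1 - fine (fc_Lambda x N (alpha m)))) ^+ 2
        * fc_norm2sq (fc_Ival x N) (f m))%:E) = Rv%:E)%E ->
  Rv < A ->
  fc_is_frame (fc_Ival x N) h (A * (1 - Num.sqrt (Rv / A)) ^+ 2)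
                        (B * (1 + Num.sqrt (Rv / B)) ^+ 2).
Proof.
move=> N2 part [A0 [B0 [fL2 fr]]] mal L1 conv sumR RvA.
have N1 : (0 < N)%N by apply: leq_trans N2.
set I := fc_Ival x N.
have mI : @measurable _ (measurableTypeR R) I by exact: measurable_itv.
set w := fun m => (fine (fc_Lambda x N (alpha m)) / (1 - fine (fc_Lambda x N (alpha m)))) ^+ 2
        * fc_norm2sq I (f m).
have w0 m : 0 <= w m by rewrite mulr_ge0 // ?sqr_ge0 // norm2sq_ge0.
have Rv0 : 0 <= Rv.
  rewrite -lee_fin -sumR; apply: nneseries_ge0 => i _ _; rewrite lee_fin; exact: w0.
have hL2 m : fc_L2 I (h m) by case: (conv m).
have dbound m : fc_norm2sq I (fun t => h m t - f m t) <= w m.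
  set L := fine (fc_Lambda x N (alpha m)).
  have L1' : L < 1.
    by move: (L1 m); rewrite /L; case: (fc_Lambda x N (alpha m)) => [r| |] //=; rewrite ?lte_fin.
  set lam := Num.max L 0.
  have lam0 : 0 <= lam by rewrite le_max lexx orbT.
  have lam1 : lam < 1 by rewrite /lam gt_max L1' ltr01.
  have := d_bound N1 part (mal m) (fun n hn => Lambda_ae hn (L1 m)) lam0 (conv m) (fL2 m) lam1.
  move/le_trans; apply; rewrite /w -/L; apply: ler_wpM2r; first exact: norm2sq_ge0.
  rewrite /lam; have [L0|L0] := leP 0 L; first by [].
  by rewrite mul0r expr0n /= sqr_ge0.
have sA : Num.sqrt (Rv / A) < 1.
  by rewrite -sqrtr1 ltr_sqrt // ltr_pdivrMr // mul1r.
split.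
  by rewrite mulr_gt0 // exprn_gt0 // subr_gt0.
split.
  by rewrite mulr_gt0 // exprn_gt0 // ltr_pwDr // sqrtr_ge0.
split => // g hg.
have [frl fru] := fr g hg.
have E : forall m, fc_ip I g (h m) = fc_ip I g (f m) + fc_ip I g (fun t => h m t - f m t).
  move=> m; rewrite -ip_add //; last exact: L2_B.
  by congr fc_ip; apply: funext => t; ring.
under eq_eseriesr do rewrite E.
apply: (frame_perturb A0 B0 (norm2sq_ge0 _ _) Rv0 RvA w0 sumR) => //.
move=> m; apply: (le_trans (CS mI hg (L2_B mI (hL2 m) (fL2 m)))).
by apply: ler_wpM2l; [exact: norm2sq_ge0 | exact: dbound].
Qed.
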